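(* Let $R$ be a semi-local ring containing $\mathbb Q$ and let $m\ge1$. For every $n\ge0$ the map $$\theta^n_{R_m}\colon tR_m\otimes_R\Omega^n_R\to\frac{\widetilde\Omega^n_{R_m}}{d\,\widetilde\Omega^{n-1}_{R_m}},\qquad t^i\otimes\omega\mapsto\text{class of }t^i\omega,$$ is surjective.
   Context: $R_m=R[t]/(t^{m+1})$, $tR_m$ the ideal generated by $t$. $\Omega^n_A$ denotes absolute Kähler differentials ($=\Omega^n_{A/\mathbb Q}$), $\widetilde\Omega^n_{R_m}=\ker(\Omega^n_{R_m}\to\Omega^n_R)$ (induced by $t\mapsto0$), with $\widetilde\Omega^{-1}_{R_m}=0$. *)

(* Defs.v *)
From HB Require Import structures.
From mathcomp Require Import all_boot all_order all_algebra.
From mathcomp Require Import ring_quotient generic_quotient.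
Unset Printing Implicit Defensive.
Import GRing.Theory.
Local Open Scope ring_scope.
Local Open Scope quotient_scope.

(* the ideal (t^(m+1)) of R[t]: polynomials whose coefficients of degree <= m vanish *)
Definition trunc_ideal (R : comNzRingType) (m : nat) : pred {poly R} :=
  fun p => [forall i : 'I_m.+1, p`_i == 0].

Arguments trunc_ideal : clear implicits.

Lemma trunc_ideal_closed (R : comNzRingType) (m : nat) :
  idealr_closed (trunc_ideal R m).
Proof.
split.
- by apply/forallP => i; rewrite coef0.
- apply/negP => /forallP /(_ ord0); by rewrite coefC eqxx oner_eq0.
- move=> a u v /forallP Hu /forallP Hv; apply/forallP => i.
  rewrite coefD coefM (eqP (Hv i)) addr0 big1 // => j _.
  have Hji : (i - j < m.+1)%N.
    by apply: leq_ltn_trans (leq_subr _ _) (ltn_ord i).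
  by rewrite (eqP (Hu (Ordinal Hji))) mulr0.
Qed.

Definition trunc_idealr (R : comNzRingType) (m : nat) : idealr {poly R} :=
  HB.pack (trunc_ideal R m)
    (GRing.isZmodClosed.Build _ (trunc_ideal R m)
       (idealr_closedB (trunc_ideal_closed R m)))
    (isProperIdeal.Build _ (trunc_ideal R m)
       (idealr_closed_nontrivial (trunc_ideal_closed R m))).

Definition Rtrunc (R : comNzRingType) (m : nat) : comNzRingType :=
  {ideal_quot (trunc_idealr R m)}.

Definition tvar (R : comNzRingType) (m : nat) : Rtrunc R m :=
  \pi_(Rtrunc R m) 'X.

Definition incl (R : comNzRingType) (m : nat) (r : R) : Rtrunc R m :=
  \pi_(Rtrunc R m) r%:P.

(* the map R_m -> R induced by t |-> 0 (well defined since elements of the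
   ideal have zero constant coefficient) *)
Definition ev0 (R : comNzRingType) (m : nat) (x : Rtrunc R m) : R :=
  (repr x)`_0.

Set Implicit Arguments.
Unset Strict Implicit.

(* A formal expression  sum_k a_k da_{k,1} /\ ... /\ da_{k,n}  in the free
   A-module on n-tuples of elements of A. *)
Definition kform (A : comNzRingType) (n : nat) := seq (A * n.-tuple A).

Definition fcoef (A : comNzRingType) n (s : kform A n) (w : n.-tuple A) : A :=
  \sum_(p <- s | p.2 == w) p.1.

Definition fscale (A : comNzRingType) n (c : A) (s : kform A n) : kform A n :=
  [seq (c * p.1, p.2) | p <- s].

Definition fopp (A : comNzRingType) n (s : kform A n) : kform A n :=
  fscale (-1) s.

Definition fsub (A : comNzRingType) n (s s' : kform A n) : kform A n :=
  s ++ fopp s'.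

Definition tset (A : comNzRingType) n (w : n.-tuple A) (i : 'I_n) (a : A)
  : n.-tuple A := [tuple of [seq if j == i then a else w`_j | j <- ord_tuple n]].

(* Defining relations of Omega^n_{A/Z} = Lambda^n_A Omega^1_{A/Z}
   (multi-additivity, Leibniz rule in each slot, alternation). *)
Inductive omega_rel (A : comNzRingType) (n : nat) : kform A n -> Prop :=
| orel_add (w : n.-tuple A) (i : 'I_n) (a b : A) :
    omega_rel [:: (1, tset w i (a + b)); (-1, tset w i a); (-1, tset w i b)]
| orel_leib (w : n.-tuple A) (i : 'I_n) (a b : A) :
    omega_rel [:: (1, tset w i (a * b)); (- a, tset w i b); (- b, tset w i a)]
| orel_alt (w : n.-tuple A) (i j : 'I_n) :
    i != j -> tnth w i = tnth w j -> omega_rel [:: (1, w)].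

(* the submodule of relations: [omega_null s] means that s represents 0 in
   Omega^n_A *)
Inductive omega_null (A : comNzRingType) (n : nat) : kform A n -> Prop :=
| onull_nil : omega_null [::]
| onull_rel s : omega_rel s -> omega_null s
| onull_add s s' : omega_null s -> omega_null s' -> omega_null (s ++ s')
| onull_scale (c : A) s : omega_null s -> omega_null (fscale c s)
| onull_ext s s' : omega_null s -> fcoef s =1 fcoef s' -> omega_null s'.

Definition fmap (A B : comNzRingType) n (f : A -> B) (s : kform A n) : kform B n :=
  [seq (f p.1, map_tuple f p.2) | p <- s].

Definition fd (A : comNzRingType) k (s : kform A k) : kform A k.+1 :=
  [seq (1, cons_tuple p.1 p.2) | p <- s].

(* x represents an element of  Omega~^n_{R_m} = ker(Omega^n_{R_m} -> Omega^n_R) *)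
Definition in_tilde (R : comNzRingType) (m n : nat) (x : kform (Rtrunc R m) n)
  : Prop := omega_null (fmap (@ev0 R m) x).

(* z represents an element of  d Omega~^{n-1}_{R_m}  (with Omega~^{-1} = 0) *)
Definition in_dtilde (R : comNzRingType) (m n : nat) :
  kform (Rtrunc R m) n -> Prop :=
  match n with
  | 0 => fun z => omega_null z
  | k.+1 => fun z => exists y : kform (Rtrunc R m) k,
              in_tilde y /\ omega_null (fsub z (fd y))
  end.

(* theta_map applied to  sum_j t^(i_j) (x) omega_j :  sum_j t^(i_j) omega_j *)
Definition theta_map (R : comNzRingType) (m n : nat)
  (ws : seq (nat * kform R n)) : kform (Rtrunc R m) n :=
  flatten [seq fscale (tvar R m ^+ p.1) (fmap (@incl R m) p.2) | p <- ws].

Definition is_ideal (R : comNzRingType) (I : R -> Prop) : Prop :=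
  [/\ I 0, (forall x y, I x -> I y -> I (x + y)) & (forall a x, I x -> I (a * x))].

Definition is_maximal_ideal (R : comNzRingType) (I : R -> Prop) : Prop :=
  [/\ is_ideal I, ~ I 1 &
      forall J : R -> Prop, is_ideal J -> ~ J 1 -> (forall x, I x -> J x) ->
        forall x, J x -> I x].

Definition semilocal (R : comNzRingType) : Prop :=
  exists (k : nat) (M : 'I_k -> R -> Prop),
    forall I, is_maximal_ideal I -> exists i, forall x, I x <-> M i x.

Definition contains_Q (R : comNzRingType) : Prop :=
  forall n : nat, exists y : R, (n.+1)%:R * y = 1.

(* Main.v *)
Require Import Defs.
From mathcomp Require Import all_boot all_algebra.
From mathcomp Require Import ring_quotient generic_quotient ring.
Set Implicit Arguments. Unset Strict Implicit. Unset Printing Implicit Defensive.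
Import GRing.Theory.
Local Open Scope ring_scope.

Section Generic.
Variables (A : comNzRingType) (n : nat).
Implicit Types (s x y z : kform A n) (w v : n.-tuple A).

Lemma fcoef_nil w : fcoef ([::] : kform A n) w = 0.
Proof. by rewrite /fcoef big_nil. Qed.

Lemma fcoef_cons (p : A * n.-tuple A) s w :
  fcoef (p :: s) w = (if p.2 == w then p.1 else 0) + fcoef s w.
Proof. by rewrite /fcoef big_cons; case: ifP; rewrite ?add0r. Qed.

Lemma fcoef_cat s s' w : fcoef (s ++ s') w = fcoef s w + fcoef s' w.
Proof. by rewrite /fcoef big_cat. Qed.

Lemma fcoef_scale c s w : fcoef (fscale c s) w = c * fcoef s w.
Proof.
rewrite /fcoef /fscale big_map mulr_sumr; apply: eq_bigl => p //.
Qed.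

Lemma fcoef_sub s s' w : fcoef (fsub s s') w = fcoef s w - fcoef s' w.
Proof. by rewrite /fsub fcoef_cat /fopp fcoef_scale mulN1r. Qed.

Lemma null_lin s1 s2 c1 c2 x : omega_null s1 -> omega_null s2 ->
  (forall w, fcoef x w = c1 * fcoef s1 w + c2 * fcoef s2 w) -> omega_null x.
Proof.
move=> h1 h2 e; apply: (onull_ext (onull_add (onull_scale c1 h1) (onull_scale c2 h2))).
by move=> w; rewrite e fcoef_cat !fcoef_scale.
Qed.

Lemma null_fcoef0 x : (forall w, fcoef x w = 0) -> omega_null x.
Proof.
move=> e; apply: (onull_ext (@onull_nil A n)) => w; by rewrite e fcoef_nil.
Qed.

Definition eqv x y := omega_null (fsub x y).

Lemma eqv_fcoef x y : fcoef x =1 fcoef y -> eqv x y.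
Proof. by move=> e; apply: null_fcoef0 => w; rewrite fcoef_sub e subrr. Qed.

Lemma eqv_refl x : eqv x x.
Proof. exact: eqv_fcoef. Qed.

Lemma eqv_sym x y : eqv x y -> eqv y x.
Proof.
move=> h; apply: (null_lin (c1 := -1) (c2 := 0) h h) => w.
by rewrite !fcoef_sub mul0r addr0 mulN1r opprB.
Qed.

Lemma eqv_trans x y z : eqv x y -> eqv y z -> eqv x z.
Proof.
move=> h1 h2; apply: (null_lin (c1 := 1) (c2 := 1) h1 h2) => w.
by rewrite !fcoef_sub !mul1r addrA subrK.
Qed.

Lemma eqv_cat x x' y y' : eqv x y -> eqv x' y' -> eqv (x ++ x') (y ++ y').
Proof.
move=> h1 h2; apply: (null_lin (c1 := 1) (c2 := 1) h1 h2) => w.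
rewrite !fcoef_sub !fcoef_cat !mul1r; ring.
Qed.

Lemma eqv_scale c x y : eqv x y -> eqv (fscale c x) (fscale c y).
Proof.
move=> h; apply: (null_lin (c1 := c) (c2 := 0) h h) => w.
by rewrite !fcoef_sub !fcoef_scale mul0r addr0 mulrBr.
Qed.

Lemma eqv_null x y : eqv x y -> omega_null y -> omega_null x.
Proof.
move=> h1 h2; apply: (null_lin (c1 := 1) (c2 := 1) h1 h2) => w.
by rewrite !fcoef_sub !mul1r subrK.
Qed.

Lemma null_eqv0 x : omega_null x -> eqv x [::].
Proof.
move=> h; apply: (null_lin (c1 := 1) (c2 := 0) h h) => w.
by rewrite fcoef_sub fcoef_nil subr0 mul1r mul0r addr0.
Qed.

Lemma eqv0_null x : eqv x [::] -> omega_null x.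
Proof. move=> h; apply: (eqv_null h); exact: onull_nil. Qed.

Lemma tnth_tset w i a j : tnth (tset w i a) j = if j == i then a else tnth w j.
Proof.
rewrite /tset (tnth_map _ (ord_tuple n)) tnth_ord_tuple.
by case: eqP => // _; rewrite (tnth_nth 0).
Qed.

End Generic.

Section Generic2.
Variables (A : comNzRingType) (n : nat).
Implicit Types (s x y z : kform A n) (w v : n.-tuple A).

Lemma tset_comm w i j a b : i != j ->
  tset (tset w j a) i b = tset (tset w i b) j a.
Proof.
move=> ij; apply: eq_from_tnth => k; rewrite !tnth_tset.
have [ki|ki] := eqVneq k i; have [kj|kj] := eqVneq k j => //.
by move: ij; rewrite -ki -kj eqxx.
Qed.

Lemma tset_id w i : tset w i (tnth w i) = w.
Proof. by apply: eq_from_tnth => k; rewrite tnth_tset; case: eqP => // ->. Qed.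

Lemma tset_tset w i a b : tset (tset w i a) i b = tset w i b.
Proof. by apply: eq_from_tnth => k; rewrite !tnth_tset; case: eqP. Qed.

Ltac fc := rewrite ?fcoef_sub ?fcoef_cat ?fcoef_scale ?fcoef_cons ?fcoef_nil /=;
  repeat (case: ifP => _); ring.

Lemma R_add c w i a b :
  eqv [:: (c, tset w i (a + b))] [:: (c, tset w i a); (c, tset w i b)].
Proof.
have r := onull_rel (orel_add w i a b).
by apply: (null_lin (c1 := c) (c2 := 0) r r) => u; fc.
Qed.

Lemma R_leib c w i a b :
  eqv [:: (c, tset w i (a * b))] [:: (c * a, tset w i b); (c * b, tset w i a)].
Proof.
have r := onull_rel (orel_leib w i a b).
by apply: (null_lin (c1 := c) (c2 := 0) r r) => u; fc.
Qed.

Lemma R_alt c w i j : i != j -> tnth w i = tnth w j -> omega_null [:: (c, w)].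
Proof.
move=> ij e; have r := onull_rel (orel_alt ij e).
by apply: (null_lin (c1 := c) (c2 := 0) r r) => u; fc.
Qed.

Lemma R_merge c1 c2 v : eqv [:: (c1, v); (c2, v)] [:: (c1 + c2, v)].
Proof. by apply: eqv_fcoef => u; fc. Qed.

Lemma R_zero v : omega_null [:: (0, v)].
Proof. by apply: null_fcoef0 => u; fc. Qed.

Lemma eqv_dropl z x : omega_null z -> eqv (z ++ x) x.
Proof. move=> h; exact: (eqv_cat (null_eqv0 h) (eqv_refl x)). Qed.

Lemma eqv_catC x y : eqv (x ++ y) (y ++ x).
Proof. by apply: eqv_fcoef => u; rewrite !fcoef_cat addrC. Qed.

Lemma eqv_dropr z x : omega_null z -> eqv (x ++ z) x.
Proof. move=> h; apply: eqv_trans (eqv_catC _ _) (eqv_dropl _ h). Qed.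

Definition tswap w i j := tset (tset w i (tnth w j)) j (tnth w i).

Lemma R_swap c w i j : i != j -> eqv [:: (c, w)] [:: (- c, tswap w i j)].
Proof.
move=> ij; set a := tnth w i; set b := tnth w j.
have ji : j != i by rewrite eq_sym.
set W := tset (tset w i (a + b)) j (a + b).
have nW : omega_null [:: (c, W)].
  apply: (@R_alt c W i j ij).
  by rewrite /W !tnth_tset ?eqxx ?(negbTE ij) ?(negbTE ji).
have E1 := R_add c (tset w j (a + b)) i a b.
rewrite !(tset_comm _ _ _ ij) in E1.
have E2 := R_add c (tset w i a) j a b.
have E3 := R_add c (tset w i b) j a b.
have X1 : omega_null [:: (c, tset (tset w i a) j a)].
  by apply: (@R_alt _ _ i j ij); rewrite !tnth_tset ?eqxx ?(negbTE ij) ?(negbTE ji).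
have X2 : omega_null [:: (c, tset (tset w i b) j b)].
  by apply: (@R_alt _ _ i j ij); rewrite !tnth_tset ?eqxx ?(negbTE ij) ?(negbTE ji).
have ew : tset (tset w i a) j b = w.
  by rewrite /a /b -(tset_comm _ _ _ ij) tset_id tset_id.
rewrite ew in E2.
have S : omega_null [:: (c, w); (c, tswap w i j)].
  apply: (null_lin (c1 := 1) (c2 := -1) nW (onull_add (onull_add E1 (onull_add E2 E3)) (onull_add X1 X2))) => u.
  rewrite /tswap -/a -/b; fc.
apply: (null_lin (c1 := 1) (c2 := 0) S S) => u; fc.
Qed.

End Generic2.

Section Functor.
Variables (A B : comNzRingType) (n : nat) (f : A -> B).
Hypotheses (f0 : f 0 = 0) (fD : forall a b, f (a + b) = f a + f b)
  (fM : forall a b, f (a * b) = f a * f b) (f1 : f 1 = 1).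

Lemma fN a : f (- a) = - f a.
Proof. by apply/eqP; rewrite -addr_eq0 -fD addNr f0. Qed.

Lemma map_tset (w : n.-tuple A) i a :
  map_tuple f (tset w i a) = tset (map_tuple f w) i (f a).
Proof. by apply: eq_from_tnth => k; rewrite tnth_map !tnth_tset tnth_map; case: eqP. Qed.

Lemma fsum I (r : seq I) (P : pred I) (F : I -> A) :
  f (\sum_(i <- r | P i) F i) = \sum_(i <- r | P i) f (F i).
Proof. exact: (big_morph f fD f0). Qed.

Lemma fcoef_fmap (U : seq (n.-tuple A)) (s : kform A n) v :
  uniq U -> all (fun p => p.2 \in U) s ->
  fcoef (fmap f s) v = \sum_(w <- U | map_tuple f w == v) f (fcoef s w).
Proof.
move=> uU; elim: s => [|p s IH] /=.
  by move=> _; rewrite fcoef_nil big1 // => w _; rewrite fcoef_nil f0.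
case/andP=> pU sU.
change (fmap f (p :: s)) with ((f p.1, map_tuple f p.2) :: fmap f s).
rewrite (eq_bigr (fun w => f (if p.2 == w then p.1 else 0) + f (fcoef s w))); last first.
  by move=> w _; rewrite fcoef_cons fD.
rewrite big_split fcoef_cons IH //=; congr (_ + _).
rewrite (big_rem _ pU) eqxx /= big1_seq ?addr0 //.
move=> w /andP [_]; rewrite mem_rem_uniq // inE => /andP [wp _].
by rewrite eq_sym (negbTE wp) f0.
Qed.

Lemma fmap_cat (s s' : kform A n) : fmap f (s ++ s') = fmap f s ++ fmap f s'.
Proof. exact: map_cat. Qed.

Lemma fmap_null (s : kform A n) : omega_null s -> omega_null (fmap f s).
Proof.
elim=> {s} [|s r|s s' _ h1 _ h2|c s _ h|s s' _ h e].
- exact: onull_nil.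
- case: r => [w i a b|w i a b|w i j ij e]; rewrite /fmap !map_cons /= ?map_tset ?fN ?f1.
  + by rewrite fD; apply/onull_rel/orel_add.
  + by rewrite fM; apply/onull_rel/orel_leib.
  + by apply/onull_rel/(orel_alt ij); rewrite !tnth_map e.
- by rewrite fmap_cat; apply: onull_add.
- have -> : fmap f (fscale c s) = fscale (f c) (fmap f s).
    by rewrite /fmap /fscale -!map_comp; apply: eq_map => p /=; rewrite fM.
  exact: onull_scale.
- apply: (onull_ext h) => v.
  have uU := undup_uniq [seq p.2 | p <- s ++ s'].
  rewrite (@fcoef_fmap _ s v uU); last first.
    by apply/allP => p ps; rewrite mem_undup map_f // mem_cat ps.
  rewrite (@fcoef_fmap _ s' v uU); last first.
    by apply/allP => p ps; rewrite mem_undup map_f // mem_cat ps orbT.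
  by apply: eq_bigr => w _; rewrite e.
Qed.

End Functor.

Section Generic3.
Variables (A : comNzRingType) (n : nat).
Implicit Types (s x y z : kform A n) (w v : n.-tuple A).

Ltac fc := rewrite ?fcoef_sub ?fcoef_cat ?fcoef_scale ?fcoef_cons ?fcoef_nil /=;
  repeat (case: ifP => _); ring.

Lemma null_lin3 s1 s2 s3 c1 c2 c3 x :
  omega_null s1 -> omega_null s2 -> omega_null s3 ->
  (forall w, fcoef x w = c1 * fcoef s1 w + c2 * fcoef s2 w + c3 * fcoef s3 w) ->
  omega_null x.
Proof.
move=> h1 h2 h3 e.
apply: (onull_ext (onull_add (onull_add (onull_scale c1 h1) (onull_scale c2 h2)) (onull_scale c3 h3))) => w.
by rewrite e !fcoef_cat !fcoef_scale.
Qed.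

Lemma Lpow a w i (u : A) k :
  eqv [:: (a, tset w i (u ^+ k.+1))] [:: ((k.+1)%:R * u ^+ k * a, tset w i u)].
Proof.
elim: k a => [|k IH] a.
  by apply: eqv_fcoef => v; rewrite expr1 expr0 mulr1 mul1r.
have h1 := R_leib a w i u (u ^+ k.+1).
have h2 := IH (a * u).
apply: (null_lin (c1 := 1) (c2 := 1) h1 h2) => v.
rewrite ?fcoef_sub ?fcoef_cat ?fcoef_scale ?fcoef_cons ?fcoef_nil /=; repeat (case: ifP => _); rewrite ?exprS; ring.
Qed.

Lemma R_d0 c w i : omega_null [:: (c, tset w i 0)].
Proof.
have h := R_add c w i 0 0; rewrite addr0 in h.
by apply: (null_lin (c1 := -1) (c2 := 0) h h) => v; fc.
Qed.

End Generic3.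

Lemma fmap_scale (A B : comNzRingType) n (f : A -> B)
  (fM : forall a b, f (a * b) = f a * f b) c (s : kform A n) :
  fmap f (fscale c s) = fscale (f c) (fmap f s).
Proof. by rewrite /fmap /fscale -!map_comp; apply: eq_map => p /=; rewrite fM. Qed.

Lemma fmap_eqv (A B : comNzRingType) n (f : A -> B) (f0 : f 0 = 0)
  (fD : forall a b, f (a + b) = f a + f b)
  (fM : forall a b, f (a * b) = f a * f b) (f1 : f 1 = 1) (x y : kform A n) :
  eqv x y -> eqv (fmap f x) (fmap f y).
Proof.
move=> h; have := fmap_null f0 fD fM f1 h.
by rewrite /eqv /fsub /fopp fmap_cat fmap_scale // (fN f0 fD) f1.
Qed.

Set Implicit Arguments. Unset Strict Implicit. Unset Printing Implicit Defensive.
Import GRing.Theory.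
Local Open Scope ring_scope.
Local Open Scope quotient_scope.

Section Trunc.
Variables (R : comNzRingType) (m : nat).
Local Notation A := (Rtrunc R m).
Local Notation t := (tvar R m).
Local Notation pi := (\pi_(Rtrunc R m)).
Local Notation ev := (@ev0 R m).
Local Notation inc := (@incl R m).

Lemma piE (p q : {poly R}) : (pi p = pi q) <-> (p - q \in trunc_idealr R m).
Proof. rewrite Quotient.idealrBE; split => [h|/eqP //]; exact/eqP. Qed.

Lemma in_trunc (p : {poly R}) : (p \in trunc_idealr R m) = [forall i : 'I_m.+1, p`_i == 0].
Proof. by []. Qed.

Lemma ev0_pi p : ev (pi p) = p`_0.
Proof.
have : pi (repr (pi p)) = pi p by rewrite reprK.
move/piE; rewrite in_trunc => /forallP /(_ ord0) /eqP.
by rewrite coefB /ev0 => /eqP; rewrite subr_eq0 => /eqP.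
Qed.

Lemma inclD a b : inc (a + b) = inc a + inc b.
Proof. by rewrite /incl polyCD rmorphD. Qed.
Lemma inclM a b : inc (a * b) = inc a * inc b.
Proof. by rewrite /incl polyCM rmorphM. Qed.
Lemma incl1 : inc (1 : R) = 1.
Proof. by rewrite /incl rmorph1. Qed.
Lemma incl0 : inc (0 : R) = 0.
Proof. by rewrite /incl rmorph0. Qed.
Lemma inclN a : inc (- a) = - inc a.
Proof. by rewrite /incl polyCN rmorphN. Qed.
Lemma incl_nat k : inc (k%:R : R) = k%:R.
Proof. by rewrite /incl rmorph_nat rmorph_nat. Qed.

Lemma ev0D x y : ev (x + y) = ev x + ev y.
Proof.
by rewrite -[x]reprK -[y]reprK -rmorphD !ev0_pi coefD.
Qed.
Lemma ev0M x y : ev (x * y) = ev x * ev y.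
Proof.
by rewrite -[x]reprK -[y]reprK -rmorphM !ev0_pi coef0M.
Qed.
Lemma ev01 : ev (1 : A) = 1.
Proof. by rewrite -(rmorph1 pi) ev0_pi coef1. Qed.
Lemma ev00 : ev (0 : A) = 0.
Proof. by rewrite -(rmorph0 pi) ev0_pi coef0. Qed.
Lemma ev0_incl r : ev (inc r) = r.
Proof. by rewrite /incl ev0_pi coefC. Qed.
Lemma ev0_tX k : ev (t ^+ k.+1) = 0.
Proof. by rewrite /tvar -rmorphXn ev0_pi coefXn. Qed.

Lemma tX_big k : (m < k)%N -> t ^+ k = 0.
Proof.
move=> mk; rewrite /tvar -rmorphXn -(rmorph0 pi); apply/piE.
rewrite subr0 in_trunc; apply/forallP => i; rewrite coefXn.
have -> : (i == k :> nat) = false.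
  by apply/negbTE; rewrite neq_ltn (leq_trans (ltn_ord i) mk).
by [].
Qed.

Lemma decomp (b : A) : exists b', b = inc (ev b) + t * b'.
Proof.
set p := repr b.
exists (pi (\poly_(i < size p) p`_i.+1)).
rewrite /incl /tvar -rmorphM -rmorphD /ev0 -/p.
suff E : (p`_0)%:P + 'X * \poly_(i < size p) p`_i.+1 = p.
  by rewrite E; exact: (esym (reprK b)).
apply/polyP => i; rewrite coefD coefC mulrC coefMX coef_poly.
case: i => [|i] /=; first by rewrite addr0.
rewrite add0r; case: ltnP => // h; rewrite nth_default // (leq_trans h) //.

Qed.

Lemma t_neq_incl r : (1 <= m)%N -> t != inc r.
Proof.
move=> hm; apply/eqP => /piE; rewrite in_trunc => /forallP.
move=> /(_ (Ordinal (hm : (1 < m.+1)%N))) /=.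
by rewrite coefB coefX coefC /= subr0 oner_eq0.
Qed.

End Trunc.

Lemma tset_cons (A : comNzRingType) n (w : n.-tuple A) a b :
  tset (cons_tuple a w) ord0 b = cons_tuple b w.
Proof.
apply: eq_from_tnth => i; rewrite tnth_tset.
case: (unliftP ord0 i) => [j ->|->]; last by rewrite eqxx tnth0.
by rewrite eq_sym (negbTE (neq_lift _ _)) !tnthS.
Qed.

Lemma map_cons_tuple (A B : Type) (f : A -> B) n a (w : n.-tuple A) :
  map_tuple f (cons_tuple a w) = cons_tuple (f a) (map_tuple f w).
Proof. by apply: val_inj. Qed.

Lemma eqv_eq (A : comNzRingType) n (x y : kform A n) : x = y -> eqv x y.
Proof. by move=> ->; apply: eqv_refl. Qed.

Ltac fc := rewrite ?fcoef_sub ?fcoef_cat ?fcoef_scale ?fcoef_cons ?fcoef_nil /=;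
  repeat (case: ifP => _); ring.

Section Main.
Variables (R : comNzRingType) (m : nat).
Hypotheses (hm : (1 <= m)%N) (hQ : contains_Q R).
Local Notation A := (Rtrunc R m).
Local Notation t := (tvar R m).
Local Notation ev := (@ev0 R m).
Local Notation inc := (@incl R m).

Definition goody k (y : kform A k) := all (fun p => ev p.1 == 0) y.
Definition exgood n : kform A n -> Prop :=
  match n with
  | 0 => fun E => E = [::]
  | k.+1 => fun E => exists y : kform A k, goody y /\ E = fd y
  end.
Definition rng n (ws : seq (nat * kform R n)) := all (fun p => (1 <= p.1 <= m)%N) ws.
Definition Dec n (x : kform A n) := exists y0 ws E,
  [/\ rng ws, exgood E & eqv x (fmap inc y0 ++ theta_map m ws ++ E)].

Lemma Dec_eqv n (x x' : kform A n) : eqv x x' -> Dec x' -> Dec x.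
Proof. by move=> h [y0 [ws [E [r g e]]]]; exists y0, ws, E; split => //; apply: eqv_trans h e. Qed.

Lemma exgood_nil n : exgood ([::] : kform A n).
Proof. by case: n => [|k] //=; exists [::]. Qed.

Lemma exgood_cat n (E E' : kform A n) : exgood E -> exgood E' -> exgood (E ++ E').
Proof.
case: n E E' => [|k] E E' /=; first by move=> -> ->.
case=> y [gy ->] [y' [gy' ->]]; exists (y ++ y'); split.
  by move: gy gy'; rewrite /goody all_cat => -> ->.
by rewrite /fd map_cat.
Qed.

Lemma theta_cat n (ws ws' : seq (nat * kform R n)) :
  theta_map m (ws ++ ws') = theta_map m ws ++ theta_map m ws'.
Proof. by rewrite /theta_map map_cat flatten_cat. Qed.

Lemma Dec_cat n (x x' : kform A n) : Dec x -> Dec x' -> Dec (x ++ x').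
Proof.
move=> [y0 [ws [E [r g e]]]] [y0' [ws' [E' [r' g' e']]]].
exists (y0 ++ y0'), (ws ++ ws'), (E ++ E'); split.
- by move: r r'; rewrite /rng all_cat => -> ->.
- exact: exgood_cat.
apply: eqv_trans (eqv_cat e e') _; apply: eqv_fcoef => w.
rewrite fmap_cat theta_cat !fcoef_cat; ring.
Qed.

Lemma Dec_null n (x : kform A n) : omega_null x -> Dec x.
Proof.
move=> h; exists [::], [::], [::]; split => //; first exact: exgood_nil.
exact: null_eqv0 h.
Qed.

Lemma Core1 n k c (wR : n.-tuple R) : Dec [:: (t ^+ k * inc c, map_tuple inc wR)].
Proof.
case: k => [|k].
  exists [:: (c, wR)], [::], [::]; split => //; first exact: exgood_nil.
  by apply: eqv_eq; rewrite expr0 mul1r.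
case: (leqP k.+1 m) => hk.
  exists [::], [:: (k.+1, [:: (c, wR)])], [::]; split => //.
  - by rewrite /rng /= hk.
  - exact: exgood_nil.
  by apply: eqv_eq.
apply: Dec_null; rewrite tX_big // mul0r; exact: R_zero.
Qed.

Lemma Core2 n k c (wR : n.-tuple R) :
  Dec [:: (t ^+ k * inc c, cons_tuple t (map_tuple inc wR))].
Proof.
have [y' hy'] := hQ k.
set W := map_tuple inc wR.
set T := t ^+ k.+1.
set u := inc y' * T.
have ha := R_leib 1 (cons_tuple t W) ord0 (inc c) u.
have hb := R_leib (inc c) (cons_tuple t W) ord0 (inc y') T.
have hc := Lpow (inc c * inc y') (cons_tuple t W) ord0 t k.
rewrite !tset_cons in ha hb hc.
have e1 : (k.+1)%:R * inc y' = 1 by rewrite -incl_nat -inclM hy' incl1.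
have ee : (k.+1)%:R * t ^+ k * (inc c * inc y') = t ^+ k * inc c.
  rewrite [LHS](_ : _ = t ^+ k * inc c * ((k.+1)%:R * inc y')); last by ring.
  by rewrite e1 mulr1.
rewrite ee -/T in hc.
have KE : eqv [:: (t ^+ k * inc c, cons_tuple t W)]
   ([:: (1, cons_tuple (inc c * u) W)] ++
    [:: (- u, cons_tuple (inc c) W); (- (inc c * T), cons_tuple (inc y') W)]).
  apply: (null_lin3 (c1 := -1) (c2 := -1) (c3 := -1) ha hb hc) => v; fc.
have gy : goody [:: (inc c * u, W)].
  by apply/allP => p; rewrite inE => /eqP ->; rewrite /u /T !ev0M ev0_tX !mulr0.
case: (leqP k.+1 m) => hk.
  exists [::].
  exists [:: (k.+1, [:: (- y', cons_tuple c wR); (- c, cons_tuple y' wR)])].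
  exists [:: (1, cons_tuple (inc c * u) W)]; split.
  - by rewrite /rng /= hk.
  - by exists [:: (inc c * u, W)].
  apply: (eqv_trans KE); apply: eqv_fcoef => v.
  rewrite /theta_map /= !map_cons_tuple -/W !inclN /u /T; fc.
exists [::], [::], [:: (1, cons_tuple (inc c * u) W)]; split => //.
  by exists [:: (inc c * u, W)].
apply: (eqv_trans KE); apply: (@eqv_dropr _ _ _ [:: (1, cons_tuple (inc c * u) W)]).
have T0 : T = 0 by rewrite /T tX_big.
by apply: null_fcoef0 => v; rewrite /u T0; fc.
Qed.

Definition nice (x : A) := (x == t) || (inc (ev x) == x).

Lemma Core2' n k c (w : n.+1.-tuple A) : tnth w ord0 = t ->
  (forall i, i != ord0 -> inc (ev (tnth w i)) = tnth w i) ->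
  Dec [:: (t ^+ k * inc c, w)].
Proof.
move=> h0 hi.
set wR := [tuple ev (tnth w (lift ord0 i)) | i < n].
suff -> : w = cons_tuple t (map_tuple inc wR) by apply: Core2.
apply: eq_from_tnth => i.
case: (unliftP ord0 i) => [j ->|->]; last by rewrite tnth0.
by rewrite tnthS tnth_map tnth_mktuple hi.
Qed.

Lemma Core3 n k c (w : n.-tuple A) : (forall i, nice (tnth w i)) ->
  Dec [:: (t ^+ k * inc c, w)].
Proof.
move=> hn.
case: (pickP (fun j => tnth w j == t)) => [j hj | none]; last first.
  have -> : w = map_tuple inc (map_tuple ev w).
    apply: eq_from_tnth => i; rewrite !tnth_map.
    by have := hn i; rewrite /nice none /= => /eqP.
  exact: Core1.
revert w hn j hj; destruct n as [|n] => w hn j hj; first by have := ltn_ord j.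
case: (pickP (fun j' => (j' != j) && (tnth w j' == t))) => [j' /andP [jj hj'] | none].
  apply: Dec_null; apply: (@R_alt _ _ _ w j' j jj).
  by rewrite (eqP hj) (eqP hj').
have oth : forall i, i != j -> inc (ev (tnth w i)) = tnth w i.
  move=> i ij; have := hn i; have := none i; rewrite ij /= /nice => -> /=.
  by move/eqP.
case: (eqVneq j ord0) => [j0 | j0].
  apply: Core2'; first by rewrite -j0 (eqP hj).
  by move=> i; rewrite -j0; apply: oth.
have j0' : ord0 != j by rewrite eq_sym.
apply: (Dec_eqv (R_swap (t ^+ k * inc c) w j0')).
rewrite -mulrN -inclN; apply: Core2'.
  by rewrite /tswap !tnth_tset (negbTE j0') eqxx (eqP hj).
move=> i i0; rewrite /tswap !tnth_tset (negbTE i0).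
case E: (i == j); first exact: oth. 
by apply: oth; rewrite E.
Qed.

Definition bad n (w : n.-tuple A) := [set i | ~~ nice (tnth w i)].

Lemma bad_tset n (w : n.-tuple A) j x : nice x -> j \in bad w ->
  (#|bad (tset w j x)| < #|bad w|)%N.
Proof.
move=> hx hj; apply: proper_card; apply/properP; split.
  apply/subsetP => i; rewrite !inE tnth_tset.
  by case: eqP => [-> | _] //; rewrite hx.
by exists j => //; rewrite inE tnth_tset eqxx hx.
Qed.

Definition P n k := forall a (w : n.-tuple A), Dec [:: (t ^+ k * a, w)].

Lemma stepP n k : P n k.+1 -> P n k.
Proof.
move=> IH.
have allnice : forall a (w : n.-tuple A), (forall i, nice (tnth w i)) ->
    Dec [:: (t ^+ k * a, w)].
  move=> a w hn; have [a' ea] := decomp a.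
  apply: (@Dec_eqv _ _ ([:: (t ^+ k * inc (ev a), w)] ++ [:: (t ^+ k.+1 * a', w)])).
    apply: eqv_fcoef => v; rewrite {1}ea exprS; fc.
  by apply: Dec_cat; [apply: Core3 | apply: IH].
move=> a w; move: {2}#|bad w| (leqnn #|bad w|) => N.
elim: N a w => [|N IHN] a w hN.
  apply: allnice => i; apply/negPn/negP => hi.
  have hb : i \in bad w by rewrite inE hi.
  by move: hN; rewrite leqn0 cards_eq0 => /eqP b0; rewrite b0 inE in hb.
case: (set_0Vmem (bad w)) => [b0 | [j hj]].
  apply: allnice => i; apply/negPn/negP => hi.
  have hb : i \in bad w by rewrite inE hi.
  by rewrite b0 inE in hb.
have [b' eb] := decomp (tnth w j).
set C := t ^+ k * a.
have h1 := R_add C w j (inc (ev (tnth w j))) (t * b').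
have h2 := R_leib C w j t b'.
rewrite -eb tset_id in h1.
apply: (@Dec_eqv _ _ ([:: (C, tset w j (inc (ev (tnth w j))))] ++
   [:: (t ^+ k * (a * b'), tset w j t)] ++ [:: (t ^+ k.+1 * a, tset w j b')])).
  apply: (null_lin (c1 := 1) (c2 := 1) h1 h2) => v; rewrite /C exprS; fc.
have nc : nice (inc (ev (tnth w j))) by rewrite /nice ev0_incl eqxx orbT.
have nt : nice t by rewrite /nice eqxx.
apply: Dec_cat; last apply: Dec_cat.
- apply: IHN; rewrite -ltnS; exact: leq_trans (bad_tset nc hj) hN.
- apply: IHN; rewrite -ltnS; exact: leq_trans (bad_tset nt hj) hN.
- exact: IH.
Qed.

Lemma P_all n d k : (m.+1 - k <= d)%N -> P n k.
Proof.
elim: d k => [|d IHd] k hk.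
  move=> a w; apply: Dec_null; rewrite tX_big ?mul0r; first exact: R_zero.
  by move: hk; rewrite leqn0 subn_eq0.
apply: stepP; apply: IHd.
by move: hk; rewrite subnS; case: (m.+1 - k)%N.
Qed.

Lemma Dec_all n (x : kform A n) : Dec x.
Proof.
elim: x => [|[a w] x IH]; first exact: (Dec_null (@onull_nil _ _)).
have -> : (a, w) :: x = [:: (a, w)] ++ x by [].
apply: Dec_cat => //.
have := @P_all n m.+1 0 (leq_subr _ _) a w; by rewrite expr0 mul1r.
Qed.

End Main.

Section Final.
Variables (R : comNzRingType) (m : nat).
Local Notation A := (Rtrunc R m).
Local Notation t := (tvar R m).
Local Notation ev := (@ev0 R m).
Local Notation inc := (@incl R m).

Lemma zero_null n (s : kform A n) : all (fun p => ev p.1 == 0) s -> omega_null (fmap ev s).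
Proof.
move=> h; apply: null_fcoef0 => w; rewrite /fcoef big1_seq // => q /andP [_].
by case/mapP => p ps -> /=; apply/eqP; exact: (allP h p ps).
Qed.

Lemma theta_zero n (ws : seq (nat * kform R n)) :
  rng m ws -> all (fun p => ev p.1 == 0) (theta_map m ws).
Proof.
elim: ws => [|[i s] ws IH] //= /andP [/andP [hi _] r].
rewrite all_cat IH // andbT; apply/allP => q /mapP [p' /mapP [p _ ->] ->] /=.
by case: i hi => [//|i] _; rewrite ev0M ev0_tX mul0r.
Qed.

Lemma fd_zero k (y : kform A k) : goody y -> omega_null (fmap ev (fd y)).
Proof.
elim: y => [|p y IH] /=; first by move=> _; exact: onull_nil.
case/andP => hp hy.
change (fmap ev (fd (p :: y))) with
  ([:: (ev 1, map_tuple ev (cons_tuple p.1 p.2))] ++ fmap ev (fd y)).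
apply: (@onull_add _ _ [:: _] _); last exact: IH.
rewrite map_cons_tuple (eqP hp).
have := R_d0 (ev 1) (cons_tuple 0 (map_tuple ev p.2)) ord0.
by rewrite tset_cons.
Qed.

Lemma fmap_ev_inc n (y : kform R n) : fmap ev (fmap inc y) = y.
Proof.
rewrite /fmap -map_comp -[RHS]map_id; apply: eq_map => [[r w]] /=.
rewrite ev0_incl; congr pair; apply: val_inj => /=.
rewrite -map_comp -[RHS]map_id; apply: eq_map => x /=; exact: ev0_incl.
Qed.

End Final.

Theorem lemma8p3 (R : comNzRingType) (m n : nat) :
  semilocal R -> contains_Q R -> (1 <= m)%N ->
  forall x : kform (Rtrunc R m) n, in_tilde x ->
  exists ws : seq (nat * kform R n),
    all (fun p => (1 <= p.1 <= m)%N) ws /\ in_dtilde (fsub x (theta_map m ws)).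
Proof.
move=> _ hQ hm x hx.
have [y0 [ws [E [r g e]]]] := Dec_all hQ x.
exists ws; split => //.
have e' := fmap_eqv (@ev00 R m) (@ev0D R m) (@ev0M R m) (@ev01 R m) e.
rewrite !fmap_cat fmap_ev_inc in e'.
have nT := zero_null (theta_zero r).
have nE : omega_null (fmap (@ev0 R m) E).
  case: n x hx y0 ws r E g e e' nT => [|k] x hx y0 ws r E g e e' nT /=.
    by rewrite g; exact: onull_nil.
  by case: g => y [gy ->]; exact: fd_zero.
have ny0 : omega_null y0.
  apply: (null_lin3 (c1 := -1) (c2 := 1) (c3 := -1) e' hx (onull_add nT nE)) => w.
  rewrite !fcoef_sub !fcoef_cat; ring.
have nI := fmap_null (@incl0 R m) (@inclD R m) (@inclM R m) (@incl1 R m) ny0.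
case: n x hx y0 ws r E g e e' nT nE ny0 nI => [|k] x hx y0 ws r E g e e' nT nE ny0 nI /=.
  rewrite g in e.
  apply: (null_lin (c1 := 1) (c2 := 1) e nI) => w.
  rewrite !fcoef_sub !fcoef_cat fcoef_nil; ring.
case: g => y [gy EE]; exists y; split; first exact: zero_null gy.
rewrite EE in e.
apply: (null_lin (c1 := 1) (c2 := 1) e nI) => w.
rewrite !fcoef_sub !fcoef_cat; ring.
Qed.
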